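(* Let $N_{\mathsf s}\ge1$ be an integer and $\beta>0$, and for $\gamma>0$ define \[ I(\gamma):=\beta\sum_{k\ge0}\frac{(N_{\mathsf s}^2\beta)^k}{k!}e^{-N_{\mathsf s}^2\beta}\log_2\!\Big(1+\frac{\gamma}{1+\frac{k}{N_{\mathsf s}^2}\gamma}\Big). \] Then its high-SNR slope is \[ \mathcal S_\infty:=\lim_{\gamma\to\infty}\gamma\,\ln 2\,\frac{dI}{d\gamma}(\gamma)=\beta e^{-N_{\mathsf s}^2\beta}. \]
   Context: $I(\gamma)$ is the large-system mutual information (bits/s/Hz) of time-hopping CDMA with $N_{\mathsf s}$ pulses per symbol, Gaussian inputs, and a bank of single-user matched filters followed by independent decoders knowing the spreading matrix. *)

(* Defs.v *)
From Stdlib Require Import Reals.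
From Coquelicot Require Import Coquelicot.
Open Scope R_scope.

Definition log2 (x : R) : R := ln x / ln 2.

Definition I_term (Ns : nat) (beta gamma : R) (k : nat) : R :=
  ((INR Ns ^ 2 * beta) ^ k / INR (Stdlib.Arith.Factorial.fact k)) * exp (- (INR Ns ^ 2 * beta))
  * log2 (1 + gamma / (1 + (INR k / INR Ns ^ 2) * gamma)).

Definition I_TH (Ns : nat) (beta gamma : R) : R :=
  beta * Series (I_term Ns beta gamma).

(* Main.v *)
Require Import Defs.
From Stdlib Require Import Reals Lra Lia.
From Coquelicot Require Import Coquelicot.
Open Scope R_scope.

Definition pk (Ns : nat) (beta : R) (k : nat) : R :=
  (INR Ns ^ 2 * beta) ^ k / INR (Stdlib.Arith.Factorial.fact k) * exp (- (INR Ns ^ 2 * beta)).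

Definition dterm (Ns : nat) (beta y : R) (k : nat) : R :=
  pk Ns beta k / ln 2 * / ((1 + (INR k / INR Ns ^ 2 + 1) * y) * (1 + INR k / INR Ns ^ 2 * y)).

Lemma ln2_pos : 0 < ln 2.
Proof. rewrite <- ln_1. apply ln_increasing; lra. Qed.

Lemma a_pos Ns : (1 <= Ns)%nat -> 0 < INR Ns ^ 2.
Proof. intros h. apply pow_lt. apply lt_0_INR. lia. Qed.

Lemma pk_nonneg Ns beta k : 0 < beta -> 0 <= pk Ns beta k.
Proof.
  intros hb. unfold pk. apply Rmult_le_pos; [|left; apply exp_pos].
  apply Rmult_le_pos. apply pow_le. apply Rmult_le_pos. apply pow2_ge_0. lra.
  left. apply Rinv_0_lt_compat. apply lt_0_INR. apply Factorial.lt_O_fact.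
Qed.

Lemma pk_ex Ns beta : ex_series (pk Ns beta).
Proof.
  set (c := INR Ns ^ 2 * beta).
  pose proof (is_exp_Reals c) as H.
  unfold is_pseries in H.
  exists (exp c * exp (- c)).
  unfold pk. fold c.
  apply (is_series_ext (fun n => (scal (pow_n c n) (/ INR (Factorial.fact n))) * exp (-c))).
  { intros n. rewrite pow_n_pow. unfold scal; simpl. unfold mult; simpl. unfold Rdiv. ring. }
  apply is_series_scal_r. exact H.
Qed.

Lemma b_nonneg Ns k : (1 <= Ns)%nat -> 0 <= INR k / INR Ns ^ 2.
Proof. intros h. unfold Rdiv. apply Rmult_le_pos. apply pos_INR. left. apply Rinv_0_lt_compat. now apply a_pos. Qed.

Lemma term_deriv Ns beta k y : (1 <= Ns)%nat -> 0 < y ->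
  is_derive (fun z => I_term Ns beta z k) y (dterm Ns beta y k).
Proof.
  intros hN hy. pose proof (b_nonneg Ns k hN) as hb. pose proof (a_pos Ns hN) as ha.
  set (b := INR k / INR Ns ^ 2) in *.
  assert (h1 : 0 < 1 + b * y) by nra.
  assert (h2 : 0 < 1 + y / (1 + b * y)).
  { assert (0 < y / (1 + b*y)) by (apply Rdiv_lt_0_compat; lra). lra. }
  unfold I_term, log2, dterm. fold (pk Ns beta k). fold b.
  auto_derive.
  - repeat split; try lra. 
  - fold (pk Ns beta k). pose proof ln2_pos. field. repeat split; nra.
Qed.

Lemma dterm_bound Ns beta y k : (1 <= Ns)%nat -> 0 < beta -> 0 < y ->
  0 <= dterm Ns beta y k <= pk Ns beta k / ln 2.
Proof.
  intros hN hbe hy. pose proof (b_nonneg Ns k hN) as hb. pose proof (pk_nonneg Ns beta k hbe) as hp.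
  pose proof ln2_pos.
  unfold dterm. set (b := INR k / INR Ns ^ 2) in *.
  assert (hD : 1 <= (1 + (b + 1) * y) * (1 + b * y)) by nra.
  assert (0 <= pk Ns beta k / ln 2) by (apply Rdiv_le_0_compat; lra).
  split.
  - apply Rmult_le_pos; auto. left; apply Rinv_0_lt_compat; lra.
  - rewrite <- (Rmult_1_r (pk Ns beta k / ln 2)) at 2. apply Rmult_le_compat_l; auto.
    rewrite <- Rinv_1. apply Rinv_le_contravar; lra.
Qed.

Lemma I_term_bound Ns beta y k : (1 <= Ns)%nat -> 0 < beta -> 0 < y ->
  0 <= I_term Ns beta y k <= pk Ns beta k * (ln (1 + y) / ln 2).
Proof.
  intros hN hbe hy. pose proof (b_nonneg Ns k hN) as hb. pose proof (pk_nonneg Ns beta k hbe) as hp.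
  pose proof ln2_pos.
  unfold I_term, log2. fold (pk Ns beta k). set (b := INR k / INR Ns ^ 2) in *.
  assert (h1 : 0 < 1 + b * y) by nra.
  assert (h3 : 0 < y / (1 + b*y)) by (apply Rdiv_lt_0_compat; lra).
  assert (h4 : y / (1 + b*y) <= y).
  { apply (Rmult_le_reg_r (1+b*y)); [lra|]. unfold Rdiv. rewrite Rmult_assoc, Rinv_l by lra. nra. }
  assert (hl : 0 <= ln (1 + y / (1 + b * y))).
  { rewrite <- ln_1. apply ln_le; lra. }
  assert (hl2 : ln (1 + y / (1 + b * y)) <= ln (1 + y)) by (apply ln_le; lra).
  split.
  - apply Rmult_le_pos; auto. apply Rdiv_le_0_compat; lra.
  - apply Rmult_le_compat_l; auto. unfold Rdiv. apply Rmult_le_compat_r; auto.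
    left; apply Rinv_0_lt_compat; lra.
Qed.

Lemma I_term_ex Ns beta y : (1 <= Ns)%nat -> 0 < beta -> 0 < y ->
  ex_series (I_term Ns beta y).
Proof.
  intros hN hbe hy.
  apply (@ex_series_le R_AbsRing R_CompleteNormedModule _ (fun k => pk Ns beta k * (ln (1 + y) / ln 2))).
  - intros n. change norm with Rabs; simpl. pose proof (I_term_bound Ns beta y n hN hbe hy). rewrite Rabs_pos_eq; lra.
  - apply ex_series_scal_r. apply pk_ex.
Qed.

Lemma sum_deriv Ns beta n y : (1 <= Ns)%nat -> 0 < y ->
  derivable_pt_lim (fun z => sum_f_R0 (fun k => I_term Ns beta z k) n) y
    (sum_f_R0 (fun k => dterm Ns beta y k) n).
Proof.
  intros hN hy. apply is_derive_Reals. induction n as [|n IH].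
  - simpl. now apply term_deriv.
  - simpl. apply (is_derive_plus (fun z => sum_f_R0 (fun k => I_term Ns beta z k) n)
       (fun z => I_term Ns beta z (S n))); auto. now apply term_deriv.
Qed.

Lemma ser_ex_abs (a : nat -> R) : ex_series a -> (forall n, 0 <= a n) ->
  { l : R | Un_cv (fun n => sum_f_R0 (fun k => Rabs (a k)) n) l }.
Proof.
  intros He Hp. exists (Series a).
  apply (proj1 (is_series_Reals _ _)).
  apply (is_series_ext a). intros n; rewrite Rabs_pos_eq; auto.
  now apply Series_correct.
Qed.

Lemma I_TH_deriv Ns beta g0 : (1 <= Ns)%nat -> 0 < beta -> 0 < g0 ->
  is_derive (I_TH Ns beta) g0 (beta * Series (dterm Ns beta g0)).
Proof.
  intros hN hbe hg.
  apply is_derive_scal.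
  pose (r := mkposreal (g0/2) ltac:(lra)).
  pose (fn := fun k y => dterm Ns beta (y + g0) k).
  assert (Hcvn : CVN_r fn r).
  { exists (fun k => pk Ns beta k / ln 2).
    destruct (ser_ex_abs (fun k => pk Ns beta k / ln 2)) as [l Hl].
    - unfold Rdiv. apply ex_series_scal_r. apply pk_ex.
    - intros n. pose proof ln2_pos. pose proof (pk_nonneg Ns beta n hbe). apply Rdiv_le_0_compat; lra.
    - exists l. split; [exact Hl|]. intros n y hy. unfold fn. unfold Boule in hy. simpl in hy.
      rewrite Rminus_0_r in hy. apply Rabs_def2 in hy.
      pose proof (dterm_bound Ns beta (y+g0) n hN hbe ltac:(lra)).
      rewrite Rabs_pos_eq; lra. }
  destruct (CVN_CVU_r fn r Hcvn 0) as [e He].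
  { rewrite Rabs_R0. simpl. lra. }
  pose (d := mkposreal (Rmin e r) ltac:(apply Rmin_pos; apply cond_pos)).
  assert (Hin : forall y, Boule g0 d y -> 0 < y /\ Boule 0 e (y - g0)).
  { intros y hy. unfold Boule in *. simpl in hy. 
    pose proof (Rmin_l e r). pose proof (Rmin_r e r). simpl in *.
    split. apply Rabs_def2 in hy. lra. rewrite Rminus_0_r. lra. }
  apply is_derive_Reals.
  apply (CVU_derivable (fun n z => sum_f_R0 (fun k => I_term Ns beta z k) n)
     (fun n z => sum_f_R0 (fun k => dterm Ns beta z k) n)
     (fun z => Series (I_term Ns beta z)) (fun z => Series (dterm Ns beta z)) g0 d).
  - intros eps heps. destruct (He eps heps) as [N HN]. exists N.
    intros n y hn hy. destruct (Hin y hy) as [_ hy'].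
    specialize (HN n (y - g0) hn hy'). unfold fn, SP in HN.
    replace (y - g0 + g0) with y in HN by ring. exact HN.
  - intros x hx. destruct (Hin x hx) as [hx' _].
    apply (proj1 (is_series_Reals _ _)). apply Series_correct. now apply I_term_ex.
  - intros n x hx. destruct (Hin x hx) as [hx' _]. now apply sum_deriv.
  - unfold Boule. rewrite Rminus_eq_0, Rabs_R0. apply cond_pos.
Qed.

Definition qq (Ns : nat) (g : R) (k : nat) : R :=
  g * / ((1 + (INR k / INR Ns ^ 2 + 1) * g) * (1 + INR k / INR Ns ^ 2 * g)).

Lemma qq_le1 Ns g k : (1 <= Ns)%nat -> 0 < g -> 0 <= qq Ns g k <= 1.
Proof.
  intros hN hg. pose proof (b_nonneg Ns k hN) as hb. unfold qq.
  set (b := INR k / INR Ns ^ 2) in *.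
  assert (hD : g <= (1 + (b + 1) * g) * (1 + b * g)) by nra.
  assert (hD' : 0 < (1 + (b + 1) * g) * (1 + b * g)) by nra.
  split. apply Rmult_le_pos; [lra|left; now apply Rinv_0_lt_compat].
  apply (Rmult_le_reg_r ((1 + (b + 1) * g) * (1 + b * g))); auto.
  rewrite Rmult_assoc, Rinv_l by lra. lra.
Qed.

Lemma qq_small Ns g k : (1 <= Ns)%nat -> 0 < g -> qq Ns g (S k) <= INR Ns ^ 2 / g.
Proof.
  intros hN hg. pose proof (a_pos Ns hN) as ha. unfold qq.
  set (a := INR Ns ^ 2) in *.
  set (b := INR (S k) / a).
  assert (hab : a * b = INR (S k)) by (unfold b; field; lra).
  assert (hk : 1 <= INR (S k)) by (rewrite S_INR; pose proof (pos_INR k); lra).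
  assert (hb : 0 < b) by (unfold b; apply Rdiv_lt_0_compat; lra).
  set (D := (1 + (b + 1) * g) * (1 + b * g)).
  assert (hD : b * g * g <= D) by (unfold D; nra).
  assert (hD' : 0 < D) by (unfold D; nra).
  apply (Rmult_le_reg_r D); auto.
  rewrite Rmult_assoc, Rinv_l by lra. rewrite Rmult_1_r.
  apply (Rmult_le_reg_r g); auto. unfold Rdiv. 
  replace (a * / g * D * g) with (a * D) by (field; lra).
  assert (a * (b*g*g) <= a * D) by (apply Rmult_le_compat_l; lra).
  replace (a * (b*g*g)) with (INR (S k) * g * g) in H by (rewrite <- hab; ring).
  nra.
Qed.

Lemma key Ns beta g : (1 <= Ns)%nat -> 0 < beta -> 0 < g ->
  Rabs (g * ln 2 * Derive (I_TH Ns beta) g - beta * exp (- (INR Ns ^ 2 * beta)))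
  <= beta * (1 + Series (fun k => pk Ns beta (S k)) * INR Ns ^ 2) / g.
Proof.
  intros hN hbe hg. pose proof ln2_pos. pose proof (a_pos Ns hN) as ha.
  rewrite (is_derive_unique _ _ _ (I_TH_deriv Ns beta g hN hbe hg)).
  assert (HS : Series (fun k => pk Ns beta k * qq Ns g k) = g * ln 2 * Series (dterm Ns beta g)).
  { rewrite <- Series_scal_l. apply Series_ext. intros k.
    pose proof (b_nonneg Ns k hN). unfold qq, dterm.
    set (b := INR k / INR Ns ^ 2) in *. field. repeat split; try lra; nra. }
  assert (Hex : ex_series (fun k => pk Ns beta k * qq Ns g k)).
  { apply (@ex_series_le R_AbsRing R_CompleteNormedModule _ (pk Ns beta)); [|apply pk_ex].
    intros n. change norm with Rabs; simpl. pose proof (qq_le1 Ns g n hN hg).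
    pose proof (pk_nonneg Ns beta n hbe).
    rewrite Rabs_pos_eq by nra. nra. }
  replace (g * ln 2 * (beta * Series (dterm Ns beta g))) with
    (beta * Series (fun k => pk Ns beta k * qq Ns g k)) by (rewrite HS; ring).
  rewrite (Series_incr_1 _ Hex).
  set (T := Series (fun k => pk Ns beta (S k) * qq Ns g (S k))).
  set (S1 := Series (fun k => pk Ns beta (S k))).
  assert (Hex1 : ex_series (fun k => pk Ns beta (S k))).
  { apply (proj1 (ex_series_incr_1 _)). apply pk_ex. }
  assert (HT : 0 <= T <= S1 * INR Ns ^ 2 / g).
  { split.
    - unfold T. rewrite <- (Rmult_0_l (Series (fun k => pk Ns beta (S k)))).
      rewrite <- Series_scal_l. apply Series_le.
      + intros n. pose proof (qq_le1 Ns g (S n) hN hg).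
        pose proof (pk_nonneg Ns beta (S n) hbe). split; nra.
      + apply (ex_series_le (V := R_CompleteNormedModule) _ (fun k => pk Ns beta (S k))); [|exact Hex1].
        intros n. change norm with Rabs; simpl. pose proof (qq_le1 Ns g (S n) hN hg).
        pose proof (pk_nonneg Ns beta (S n) hbe). rewrite Rabs_pos_eq by nra. nra.
    - unfold T, S1. unfold Rdiv. rewrite Rmult_assoc, <- Series_scal_r.
      apply Series_le.
      + intros n. pose proof (qq_le1 Ns g (S n) hN hg). pose proof (qq_small Ns g n hN hg).
        pose proof (pk_nonneg Ns beta (S n) hbe). split. nra.
        apply Rmult_le_compat_l; auto.
      + apply ex_series_scal_r. exact Hex1. }
  assert (Hp0 : pk Ns beta 0 = exp (- (INR Ns ^ 2 * beta))).
  { unfold pk. simpl. field. }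
  assert (Hq0 : qq Ns g 0 = g / (1 + g)).
  { unfold qq. simpl. rewrite Rdiv_0_l. field. lra. }
  rewrite Hp0, Hq0.
  set (e := exp (- (INR Ns ^ 2 * beta))).
  assert (he : 0 < e <= 1).
  { split. apply exp_pos. unfold e. rewrite exp_Ropp.
    assert (0 <= INR Ns ^ 2 * beta) by nra.
    pose proof (exp_ineq1_le (INR Ns ^ 2 * beta)).
    rewrite <- Rinv_1. apply Rinv_le_contravar; lra. }
  assert (hu : 0 <= e / (1 + g) <= 1 / g).
  { split. apply Rdiv_le_0_compat; lra.
    unfold Rdiv. apply Rmult_le_compat; try lra. left; apply Rinv_0_lt_compat; lra.
    apply Rinv_le_contravar; lra. }
  replace (beta * (e * (g / (1 + g)) + T) - beta * e) with (beta * (T - e / (1 + g)))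
    by (field; lra).
  replace (beta * (1 + S1 * INR Ns ^ 2) / g) with (beta * (1 / g + S1 * INR Ns ^ 2 / g))
    by (field; lra).
  rewrite Rabs_mult, Rabs_pos_eq by lra.
  apply Rmult_le_compat_l; [lra|].
  apply Rabs_le. lra.
Qed.

Theorem corollary3 (Ns : nat) (beta : R) (hNs : (1 <= Ns)%nat) (hbeta : 0 < beta) :
  (forall gamma : R, 0 < gamma -> ex_derive (I_TH Ns beta) gamma) /\
  is_lim (fun gamma => gamma * ln 2 * Derive (I_TH Ns beta) gamma) p_infty
    (beta * exp (- (INR Ns ^ 2 * beta))).
Proof.
  split.
  - intros g hg. eexists. now apply I_TH_deriv.
  - apply is_lim_spec. simpl. intros eps.
    set (K := beta * (1 + Series (fun k => pk Ns beta (S k)) * INR Ns ^ 2)).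
    pose proof (cond_pos eps) as he.
    exists (Rmax 1 (Rabs K / eps)). intros x hx.
    pose proof (Rmax_l 1 (Rabs K / eps)). pose proof (Rmax_r 1 (Rabs K / eps)).
    assert (hx0 : 0 < x) by lra.
    eapply Rle_lt_trans. apply (key Ns beta x hNs hbeta hx0). fold K.
    apply (Rle_lt_trans _ (Rabs K / x)).
    + unfold Rdiv. apply Rmult_le_compat_r. left; now apply Rinv_0_lt_compat. apply Rle_abs.
    + apply (Rmult_lt_reg_r x); auto. unfold Rdiv. rewrite Rmult_assoc, Rinv_l by lra.
      rewrite Rmult_1_r.
      assert (Rabs K / eps < x) by lra.
      apply (Rmult_lt_compat_r eps) in H1; auto. unfold Rdiv in H1.
      rewrite Rmult_assoc, Rinv_l, Rmult_1_r in H1 by lra. lra.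
Qed.
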